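(* For every PICOD hypergraph $\mathcal{H}$ with $\Delta(\mathcal{H})\ge 1$ and every prime power $q$, $\beta_q(\mathcal{H})\le\Delta(\mathcal{H})$.
   Context: PICOD problem: a server holds $m$ messages $b_1,\dots,b_m\in\mathbb{F}_q$; there are $n$ clients, client $i$ having side-information $\{b_j: j\in S_i\}$, $S_i\subseteq[m]$, and request-set $R_i=[m]\setminus S_i$ (assumed non-empty); client $i$ wants any one message $b_j$ with $j\in R_i$. A PICOD scheme of length $\ell$ over $\mathbb{F}_q$ is an encoding map $\phi:\mathbb{F}_q^m\to\mathbb{F}_q^\ell$ such that for every client $i$ there is an index $j_i\in R_i$ and a function $\psi_i$ with $\psi_i(\phi(b),(b_k)_{k\in S_i})=b_{j_i}$ for all $b\in\mathbb{F}_q^m$. The PICOD hypergraph $\mathcal{H}$ has vertex set $[m]$ and edge set $\{R_i:i\in[n]\}$. $\beta_q(\mathcal{H})$ is the minimum length of a PICOD scheme for $\mathcal{H}$ over $\mathbb{F}_q$. The degree of a vertex is the number of edges containing it, and $\Delta(\mathcal{H})$ is the maximum degree over all vertices. *)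

(* Defs.v *)
From HB Require Import structures.
From mathcomp Require Import all_boot all_order all_algebra.
From Stdlib Require Import ClassicalEpsilon.
Set Implicit Arguments. Unset Strict Implicit. Unset Printing Implicit Defensive.

(* A PICOD instance with m messages and n clients: client i has request set
   R_i (non-empty) and side information S_i = [m] \ R_i. *)
Record picod (m n : nat) := Picod {
  req : 'I_n -> {set 'I_m};
  req_nonempty : forall i, req i != set0 }.

Section PICOD.
Variables (m n : nat) (H : picod m n) (F : finFieldType).

(* the side information (b_k)_{k in S_i} of client i, encoded as the vector
   b with the coordinates in R_i masked out *)
Definition side (i : 'I_n) (b : 'I_m -> F) : 'I_m -> F :=
  fun k => if k \in req H i then 0%R else b k.

Definition is_scheme (l : nat) (phi : ('I_m -> F) -> ('I_l -> F)) : Prop :=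
  forall i : 'I_n, exists2 j : 'I_m, j \in req H i &
    exists psi : ('I_l -> F) -> ('I_m -> F) -> F,
      forall b : 'I_m -> F, psi (phi b) (side i b) = b j.

Definition has_scheme (l : nat) : Prop := exists phi, @is_scheme l phi.

Definition has_schemeb (l : nat) : bool :=
  if excluded_middle_informative (has_scheme l) then true else false.

Lemma has_scheme_m : has_scheme m.
Proof.
exists (fun b => b) => i.
have /set0Pn [j Hj] := req_nonempty H i.
by exists j => //; exists (fun y _ => y j).
Qed.

Lemma has_schemeb_ex : exists l, has_schemeb l.
Proof.
exists m; rewrite /has_schemeb.
by case: excluded_middle_informative => // Hn; case: (Hn has_scheme_m).
Qed.

(* beta_q(H): minimum length of a PICOD scheme over F (|F| = q) *)
Definition beta : nat := ex_minn has_schemeb_ex.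

End PICOD.

Definition edges m n (H : picod m n) : {set {set 'I_m}} :=
  [set req H i | i : 'I_n].

Definition degree m n (H : picod m n) (v : 'I_m) : nat :=
  #|[set e in edges H | v \in e]|.

Definition max_degree m n (H : picod m n) : nat :=
  \max_(v : 'I_m) degree H v.

(* Main.v *)
Require Import Defs.
From mathcomp Require Import all_boot all_order all_algebra.
From Stdlib Require Import FunctionalExtensionality ClassicalEpsilon.
Set Implicit Arguments. Unset Strict Implicit. Unset Printing Implicit Defensive.
Import GRing.Theory.

Section Aux.
Variables (m n : nat) (H : picod m n) (F : finFieldType).

Definition covers (A : {set 'I_n}) (T : {set 'I_m}) :=
  forall i, i \in A -> forall v, v \in req H i ->
    exists2 i', i' \in A & (v \in req H i') && (#|req H i' :&: T| == 1%N).

Lemma cover_ex k : forall A : {set 'I_n}, #|A| <= k -> exists T, covers A T.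
Proof.
elim: k => [|k IH] A hA.
  exists set0 => i; move: hA; rewrite leqn0 cards_eq0 => /eqP -> ; by rewrite inE.
case: (boolP [exists i0 in A, req H i0 \subset \bigcup_(i in A :\ i0) req H i]).
  case/exists_inP => i0 i0A sub.
  have : #|A :\ i0| <= k by rewrite -ltnS (cardsD1 i0 A) i0A in hA.
  case/IH => T cT; exists T => i iA v vi.
  case: (eqVneq i i0) => [ei|ne].
    subst i; move/subsetP: sub => /(_ v vi) /bigcupP [i1 i1A vi1].
    case: (cT i1 i1A v vi1) => i' i'A h; exists i' => //.
    by move: i'A; rewrite inE => /andP [].
  have iA' : i \in A :\ i0 by rewrite !inE ne.
  case: (cT i iA' v vi) => i' i'A h; exists i' => //.
  by move: i'A; rewrite inE => /andP [].
move/exists_inPn => nsub.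
pose Pb i p := (p \in req H i) && [forall i', (i' \in A) ==> (i' != i) ==> (p \notin req H i')].
have hP : forall i, i \in A -> exists p, Pb i p.
  move=> i iA; move: (nsub i iA) => /subsetPn [p pi pn]; exists p.
  rewrite /Pb pi /=; apply/forallP => i'; apply/implyP => i'A; apply/implyP => ne.
  apply/negP => pi'; move/negP: pn; apply; apply/bigcupP; exists i' => //.
  by rewrite !inE ne.
pose T := [set v | [exists i, (i \in A) && ([pick p | Pb i p] == Some v)]].
exists T => i iA v vi; exists i => //; rewrite vi /=.
have [p ep] : exists p, [pick x | Pb i x] = Some p.
  case: (pickP (Pb i)) => [p Pp|Hn]; first by exists p.
  by case: (hP i iA) => p; rewrite Hn.
have Pp : Pb i p by move: ep; case: (pickP (Pb i)) => // q Pq [<-].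
apply/cards1P; exists p; apply/setP => w; rewrite !inE.
apply/andP/eqP.
  case=> wi /existsP [i' /andP [i'A /eqP pk]].
  have Pw : Pb i' w by move: pk; case: (pickP (Pb i')) => // q Pq [<-].
  move: Pw => /andP [wi' /forallP fa].
  have ei : i' = i.
    case: (eqVneq i' i) => // ne; move: (fa i); rewrite iA /= eq_sym ne /=.
    by rewrite wi.
  by subst i'; move: pk; rewrite ep => -[].
move=> ->; move: Pp => /andP [pi _]; split => //.
by apply/existsP; exists i; rewrite iA ep /=.
Qed.

Definition degA (A : {set 'I_n}) v := #|[set e in [set req H i | i in A] | v \in e]|.

Lemma deg_drop A T v : covers A T ->
  degA [set i in A | #|req H i :&: T| != 1%N] v <= (degA A v).-1.
Proof.
move=> cT.
have sub : [set e in [set req H i | i in [set i in A | #|req H i :&: T| != 1%N]] | v \in e]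
   \subset [set e in [set req H i | i in A] | v \in e].
  apply/subsetP => e; rewrite !inE => /andP [/imsetP [i]]; rewrite inE => /andP [iA _] -> ->.
  by rewrite andbT; apply/imsetP; exists i.
case: (boolP [exists i in A, v \in req H i]).
  case/exists_inP => i iA vi; case: (cT i iA v vi) => i' i'A /andP [vi' c1].
  rewrite /degA -ltnS prednK; last first.
    apply/card_gt0P; exists (req H i'); rewrite !inE vi' andbT.
    by apply/imsetP; exists i'.
  apply: proper_card; apply/properP; split => //.
  exists (req H i'); first by rewrite !inE vi' andbT; apply/imsetP; exists i'.
  rewrite !inE vi' andbT; apply/imsetP => [[i'' ]]; rewrite inE => /andP [_ ne] e.
  by rewrite -e c1 in ne.
move/exists_inPn => nv.
have : degA A v = 0%N.
  apply/eqP; rewrite cards_eq0; apply/eqP/setP => e; rewrite !inE.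
  apply/negP => /andP [/imsetP [i iA ->]]; by rewrite (negbTE (nv i iA)).
rewrite /degA => ->; apply: (leq_trans (subset_leq_card sub)) => /=.
by rewrite -/(degA A v) (_ : degA A v = 0%N) //; apply/eqP; rewrite cards_eq0; apply/eqP/setP => e; rewrite !inE;
  apply/negP => /andP [/imsetP [i iA ->]]; rewrite (negbTE (nv i iA)).
Qed.

Definition decodes (l : nat) (phi : ('I_m -> F) -> ('I_l -> F)) (A : {set 'I_n}) :=
  forall i, i \in A -> exists2 j, j \in req H i &
    exists psi : ('I_l -> F) -> ('I_m -> F) -> F,
      forall b, psi (phi b) (side H i b) = b j.

Lemma main k : forall A, (forall v, degA A v <= k) ->
  exists phi : ('I_m -> F) -> ('I_k -> F), decodes phi A.
Proof.
elim: k => [|k IH] A hd.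
  exists (fun _ _ => 0%R) => i iA; exfalso.
  have /set0Pn [v vi] := req_nonempty H i.
  move: (hd v); rewrite leqn0 cards_eq0 => /eqP/setP/(_ (req H i)).
  by rewrite !inE vi andbT; move/negP; apply; apply/imsetP; exists i.
have [T cT] := cover_ex (leqnn #|A|).
pose A' := [set i in A | #|req H i :&: T| != 1%N].
have [phi' dphi'] : exists phi' : ('I_m -> F) -> ('I_k -> F), decodes phi' A'.
  apply: IH => v; apply: (leq_trans (deg_drop v cT)).
  by rewrite -subn1 leq_subLR add1n.
pose phi b (x : 'I_k.+1) := match unlift ord0 x with
  | Some y => phi' b y | None => (\sum_(t in T) b t)%R end.
exists phi => i iA.
case: (boolP (#|req H i :&: T| == 1%N)) => c1; last first.
  have iA' : i \in A' by rewrite inE iA c1.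
  case: (dphi' i iA') => j ji [psi hpsi]; exists j => //.
  exists (fun o s => psi (fun y => o (lift ord0 y)) s) => b.
  rewrite -hpsi; congr psi; apply: functional_extensionality => y; by rewrite /phi liftK.
case/cards1P: c1 => j ej.
have jT : j \in req H i :&: T by rewrite ej inE.
move: (jT); rewrite inE => /andP [ji jT'].
exists j => //.
exists (fun o s => o ord0 - \sum_(t in T | t != j) s t)%R => b.
rewrite /phi unlift_none (bigD1 j) //=.
have -> : (\sum_(t in T | t != j) side H i b t = \sum_(t in T | t != j) b t)%R.
  apply: eq_bigr => t /andP [tT tj]; rewrite /side.
  case: ifP => // ti; exfalso.
  have : t \in req H i :&: T by rewrite inE ti tT.
  by rewrite ej inE (negbTE tj).
by rewrite addrK.
Qed.

End Aux.

Theorem theorem1 (m n : nat) (H : picod m n) (F : finFieldType) :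
  1 <= max_degree H -> beta H F <= max_degree H.
Proof.
move=> _.
have hd : forall v, degA H [set: 'I_n] v <= max_degree H.
  move=> v; rewrite /degA.
  have -> : [set req H i | i in [set: 'I_n]] = edges H.
    by apply/setP => e; rewrite /edges; apply/imsetP/imsetP => [[i _ ->]|[i _ ->]]; exists i.
  by apply: (@leq_bigmax _ (fun v => degree H v)).
have hs : has_scheme H F (max_degree H).
  have [phi dphi] := @main m n H F (max_degree H) [set: 'I_n] hd.
  by exists phi => i; apply: dphi; rewrite inE.
rewrite /beta; case: ex_minnP => l _; apply.
rewrite /has_schemeb; case: excluded_middle_informative => // Hn; by case: (Hn hs).
Qed.
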